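(* Let $\lambda_0>\lambda_1$ be countable nonzero additively indecomposable ordinals. Then $\lambda_0\le_{sH}\lambda_0+\lambda_1$ and $\lambda_1\le_{sH}\lambda_0+\lambda_1$.
   Context: Ordinals are identified with linear orders $(\eta,<)$; $\lambda_0+\lambda_1$ denotes ordinal addition. A copy of a countable structure is an isomorphic structure with domain $\omega$. Hyper-Medvedev reducibility: for countable structures, $\mathcal{A}\le_{sH}\mathcal{B}$ means there is a single (pair of) index(es) for a $\Delta^1_1$ definition relative to an oracle such that for every copy $B$ of $\mathcal{B}$, the set defined by this $\Delta^1_1(B)$ definition is (the atomic diagram of) a copy of $\mathcal{A}$; i.e. a copy of $\mathcal{A}$ is uniformly $\Delta^1_1$-definable in every copy of $\mathcal{B}$. An ordinal $\lambda>0$ is additively indecomposable if $\beta+\gamma<\lambda$ whenever $\beta,\gamma<\lambda$. *)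

(* Defs.v *)
From Stdlib Require Import Arith List.

Definition is_wellorder (A : Type) (lt : A -> A -> Prop) : Prop :=
  (forall x, ~ lt x x) /\
  (forall x y z, lt x y -> lt y z -> lt x z) /\
  (forall x y, lt x y \/ x = y \/ lt y x) /\
  well_founded lt.

Definition countable (A : Type) : Prop :=
  exists f : A -> nat, forall x y, f x = f y -> x = y.

Definition order_iso (A B : Type) (ltA : A -> A -> Prop) (ltB : B -> B -> Prop) : Prop :=
  exists (f : A -> B) (g : B -> A),
    (forall x, g (f x) = x) /\ (forall y, f (g y) = y) /\
    (forall x y, ltA x y <-> ltB (f x) (f y)).

(* proper initial segment below a : the ordinals < lambda are exactly these *)
Definition seg (A : Type) (lt : A -> A -> Prop) (a : A) : Type := { x : A | lt x a }.
Definition seg_lt (A : Type) (lt : A -> A -> Prop) (a : A) (x y : seg A lt a) : Prop :=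
  lt (proj1_sig x) (proj1_sig y).

(* ordinal addition: the order sum, A first then B *)
Definition sum_lt (A B : Type) (ltA : A -> A -> Prop) (ltB : B -> B -> Prop)
  (x y : A + B) : Prop :=
  match x, y with
  | inl a, inl a' => ltA a a'
  | inl _, inr _ => True
  | inr _, inl _ => False
  | inr b, inr b' => ltB b b'
  end.

Definition ord_lt (A1 : Type) (lt1 : A1 -> A1 -> Prop) (A0 : Type) (lt0 : A0 -> A0 -> Prop) : Prop :=
  exists a : A0, order_iso A1 (seg A0 lt0 a) lt1 (seg_lt A0 lt0 a).

(* lambda > 0 and beta + gamma < lambda whenever beta, gamma < lambda *)
Definition add_indecomposable (A : Type) (lt : A -> A -> Prop) : Prop :=
  inhabited A /\
  forall a b : A, exists c : A,
    order_iso (seg A lt a + seg A lt b) (seg A lt c)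
      (sum_lt (seg A lt a) (seg A lt b) (seg_lt A lt a) (seg_lt A lt b))
      (seg_lt A lt c).

(* A relational structure on a subset of omega in the language {<=}, given by
   its relation R; its domain is {n | R n n}. *)
Definition is_copy (A : Type) (lt : A -> A -> Prop) (R : nat -> nat -> Prop) : Prop :=
  (forall m n, R m n -> R m m /\ R n n) /\
  (forall m n, n < m -> R m m -> R n n) /\
  exists (f : A -> nat) (g : nat -> A),
    (forall x, R (f x) (f x)) /\
    (forall x, g (f x) = x) /\
    (forall n, R n n -> f (g n) = n) /\
    (forall x y, (lt x y \/ x = y) <-> R (f x) (f y)).

Inductive term : Type :=
| tvar : nat -> term          (* de Bruijn number variable *)
| tzero : term
| tsucc : term -> term
| tadd : term -> term -> term
| tmul : term -> term -> term.

(* arithmetical formulas in one set variable X and the oracle relation O *)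
Inductive aform : Type :=
| feq : term -> term -> aform
| flt : term -> term -> aform
| fmemX : term -> aform
| foracle : term -> term -> aform
| fnot : aform -> aform
| fand : aform -> aform -> aform
| for_ : aform -> aform -> aform
| fall : aform -> aform
| fex : aform -> aform.

Fixpoint teval (e : nat -> nat) (t : term) : nat :=
  match t with
  | tvar k => e k
  | tzero => 0
  | tsucc t => S (teval e t)
  | tadd t u => teval e t + teval e u
  | tmul t u => teval e t * teval e u
  end.

Definition scons (n : nat) (e : nat -> nat) : nat -> nat :=
  fun k => match k with 0 => n | S k => e k end.

Fixpoint sat (O : nat -> nat -> Prop) (X : nat -> Prop) (e : nat -> nat) (p : aform) : Prop :=
  match p with
  | feq t u => teval e t = teval e u
  | flt t u => teval e t < teval e u
  | fmemX t => X (teval e t)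
  | foracle t u => O (teval e t) (teval e u)
  | fnot p => ~ sat O X e p
  | fand p q => sat O X e p /\ sat O X e q
  | for_ p q => sat O X e p \/ sat O X e q
  | fall p => forall n, sat O X (scons n e) p
  | fex p => exists n, sat O X (scons n e) p
  end.

Definition env2 (m n : nat) : nat -> nat := scons m (scons n (fun _ => 0)).

Definition sigma11_rel (phi : aform) (O : nat -> nat -> Prop) (m n : nat) : Prop :=
  exists X : nat -> Prop, sat O X (env2 m n) phi.
Definition pi11_rel (psi : aform) (O : nat -> nat -> Prop) (m n : nat) : Prop :=
  forall X : nat -> Prop, sat O X (env2 m n) psi.

Definition sH_le (copyA copyB : (nat -> nat -> Prop) -> Prop) : Prop :=
  exists phi psi : aform,
    forall B, copyB B ->
      exists R, copyA R /\
        (forall m n, R m n <-> sigma11_rel phi B m n) /\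
        (forall m n, R m n <-> pi11_rel psi B m n).

(* Main.v *)
Require Import Defs.
From Stdlib Require Import Arith Lia List Classical ClassicalEpsilon Setoid Morphisms FunctionalExtensionality PropExtensionality IndefiniteDescription.


Definition pr (a b : nat) := (a+b)*(a+b)+a.

Lemma pr_inj a b a' b' : pr a b = pr a' b' -> a = a' /\ b = b'.
Proof.
  unfold pr; intro H.
  assert (a + b = a' + b').
  { destruct (lt_eq_lt_dec (a+b) (a'+b')) as [[h|h]|h]; auto.
    - exfalso. assert ((a+b+1)*(a+b+1) <= (a'+b')*(a'+b')) by (apply Nat.mul_le_mono; lia). nia.
    - exfalso. assert ((a'+b'+1)*(a'+b'+1) <= (a+b)*(a+b)) by (apply Nat.mul_le_mono; lia). nia. }
  rewrite H0 in H. lia.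
Qed.

Fixpoint lift (t:term) : term := match t with
 | tvar k => tvar (S k) | tzero => tzero | tsucc u => tsucc (lift u)
 | tadd u v => tadd (lift u) (lift v) | tmul u v => tmul (lift u) (lift v) end.
Lemma teval_lift n e t : teval (scons n e) (lift t) = teval e t.
Proof. induction t; simpl; auto. Qed.
Definition pT a b := tadd (tmul (tadd a b) (tadd a b)) a.
Lemma teval_pT e a b : teval e (pT a b) = pr (teval e a) (teval e b).
Proof. reflexivity. Qed.
Fixpoint tn k := match k with 0 => tzero | S k => tsucc (tn k) end.
Lemma teval_tn e k : teval e (tn k) = k.
Proof. induction k; simpl; auto. Qed.
Definition imp p q := for_ (fnot p) q.
Definition ltO t u := fand (foracle t u) (fnot (feq t u)).
Definition domF t := foracle t t.
Definition xat (c t : term) := fmemX (pT c t).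
Definition l4 t := lift (lift (lift (lift t))).
Definition l2 t := lift (lift t).

Definition ltN (O:nat->nat->Prop) a b := O a b /\ a <> b.

Lemma sat_imp O X e p q : sat O X e (imp p q) <-> (sat O X e p -> sat O X e q).
Proof. simpl. split; [tauto|]. intro H. destruct (classic (sat O X e p)); tauto. Qed.
Lemma sat_ltO O X e t u : sat O X e (ltO t u) <-> ltN O (teval e t) (teval e u).
Proof. reflexivity. Qed.
Lemma sat_domF O X e t : sat O X e (domF t) <-> O (teval e t) (teval e t).
Proof. reflexivity. Qed.
Lemma sat_xat O X e c t : sat O X e (xat c t) <-> X (pr (teval e c) (teval e t)).
Proof. reflexivity. Qed.
Lemma sat_fall O X e p : sat O X e (fall p) <-> forall n, sat O X (scons n e) p.
Proof. reflexivity. Qed.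
Lemma sat_fex O X e p : sat O X e (fex p) <-> exists n, sat O X (scons n e) p.
Proof. reflexivity. Qed.
Lemma sat_fand O X e p q : sat O X e (fand p q) <-> sat O X e p /\ sat O X e q.
Proof. reflexivity. Qed.
Lemma sat_for O X e p q : sat O X e (for_ p q) <-> sat O X e p \/ sat O X e q.
Proof. reflexivity. Qed.
Lemma sat_fnot O X e p : sat O X e (fnot p) <-> ~ sat O X e p.
Proof. reflexivity. Qed.
Lemma sat_flt O X e t u : sat O X e (flt t u) <-> teval e t < teval e u.
Proof. reflexivity. Qed.
Lemma sat_feq O X e t u : sat O X e (feq t u) <-> teval e t = teval e u.
Proof. reflexivity. Qed.
Lemma sat_for' O X e t u : sat O X e (foracle t u) <-> O (teval e t) (teval e u).
Proof. reflexivity. Qed.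
Lemma l4_ev a b c d e t : teval (scons a (scons b (scons c (scons d e)))) (l4 t) = teval e t.
Proof. unfold l4; rewrite !teval_lift; auto. Qed.
Lemma l2_ev a b e t : teval (scons a (scons b e)) (l2 t) = teval e t.
Proof. unfold l2; rewrite !teval_lift; auto. Qed.

Lemma or_imp (A B : Prop) : (~ A \/ B) <-> (A -> B).
Proof. split; [tauto|]. intro H. destruct (classic A); tauto. Qed.

Ltac satt := unfold imp, ltO, domF, xat, pT, l4, l2, ltN, pr; cbn [sat];
  repeat setoid_rewrite teval_lift; cbn [teval tn scons]; repeat setoid_rewrite teval_lift;
  repeat setoid_rewrite or_imp.

(* EmbA: embedding of seg(x)+seg(x) into the structure *)
Definition wat c b i j := xat c (pT (tn b) (pT i j)).
Definition totA c x b := fall (imp (ltO (tvar 0) (lift x)) (fex (fand (domF (tvar 0)) (wat (l2 c) b (tvar 1) (tvar 0))))).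
Definition monoA c x b := fall (fall (fall (fall (imp (wat (l4 c) b (tvar 3) (tvar 1)) (imp (wat (l4 c) b (tvar 2) (tvar 0)) (imp (ltO (tvar 3) (l4 x)) (imp (ltO (tvar 2) (l4 x)) (imp (ltO (tvar 3) (tvar 2)) (ltO (tvar 1) (tvar 0)))))))))).
Definition crossA c x := fall (fall (fall (fall (imp (wat (l4 c) 0 (tvar 3) (tvar 1)) (imp (wat (l4 c) 1 (tvar 2) (tvar 0)) (imp (ltO (tvar 3) (l4 x)) (imp (ltO (tvar 2) (l4 x)) (ltO (tvar 1) (tvar 0))))))))).
Definition EmbA c x := fand (totA c x 0) (fand (totA c x 1) (fand (monoA c x 0) (fand (monoA c x 1) (crossA c x)))).

Definition GA (W:nat->Prop) b i j := W (pr b (pr i j)).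
Definition totAs O W x b := forall i, ltN O i x -> exists j, O j j /\ GA W b i j.
Definition monoAs O W x b := forall i i' j j', GA W b i j -> GA W b i' j' -> ltN O i x -> ltN O i' x -> ltN O i i' -> ltN O j j'.
Definition EmbA_sem O W x := totAs O W x 0 /\ totAs O W x 1 /\ monoAs O W x 0 /\ monoAs O W x 1 /\
  (forall i i' j j', GA W 0 i j -> GA W 1 i' j' -> ltN O i x -> ltN O i' x -> ltN O j j').

Lemma EmbA_ok O X e c x : sat O X e (EmbA c x) <-> EmbA_sem O (fun k => X (pr (teval e c) k)) (teval e x).
Proof.
  unfold EmbA, totA, monoA, crossA, wat, EmbA_sem, totAs, monoAs, GA. satt. reflexivity.
Qed.

Definition gBf c k j := xat c (pT (tn 0) (pT k j)).
Definition sBf c k := xat c (pT (tn 1) k).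
Definition totB c x := fall (imp (domF (tvar 0)) (fex (fand (gBf (l2 c) (tvar 1) (tvar 0)) (ltO (tvar 0) (l2 x))))).
Definition monoB c (x : term) := fall (fall (fall (fall (imp (gBf (l4 c) (tvar 3) (tvar 1)) (imp (gBf (l4 c) (tvar 2) (tvar 0))
  (imp (domF (tvar 3)) (imp (domF (tvar 2)) (imp (ltO (tvar 3) (tvar 2))
   (for_ (fand (fnot (sBf (l4 c) (tvar 3))) (sBf (l4 c) (tvar 2)))
     (fand (imp (sBf (l4 c) (tvar 3)) (sBf (l4 c) (tvar 2))) (fand (imp (sBf (l4 c) (tvar 2)) (sBf (l4 c) (tvar 3))) (ltO (tvar 1) (tvar 0))))))))))))).
Definition EmbB c x := fand (totB c x) (monoB c x).
Definition GB (W:nat->Prop) k j := W (pr 0 (pr k j)).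
Definition SB (W:nat->Prop) k := W (pr 1 k).
Definition EmbB_sem O W x :=
  (forall k, O k k -> exists j, GB W k j /\ ltN O j x) /\
  (forall k k' j j', GB W k j -> GB W k' j' -> O k k -> O k' k' -> ltN O k k' ->
     (~ SB W k /\ SB W k') \/ ((SB W k -> SB W k') /\ (SB W k' -> SB W k) /\ ltN O j j')).
Lemma EmbB_ok O X e c x : sat O X e (EmbB c x) <-> EmbB_sem O (fun k => X (pr (teval e c) k)) (teval e x).
Proof. unfold EmbB, totB, monoB, gBf, sBf, EmbB_sem, GB, SB. satt. reflexivity. Qed.

Record part := { sS : term -> term -> aform; sN : term -> term -> aform;
  SS : (nat->nat->Prop) -> (nat->Prop) -> nat -> Prop; SN : (nat->nat->Prop) -> (nat->Prop) -> nat -> Prop;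
  sS_ok : forall O X e c x, sat O X e (sS c x) <-> SS O (fun k => X (pr (teval e c) k)) (teval e x);
  sN_ok : forall O X e c x, sat O X e (sN c x) <-> SN O (fun k => X (pr (teval e c) k)) (teval e x) }.

Definition sigP (E : term -> term -> aform) c x := fand (domF x) (E c x).
Definition sigNP (E : term -> term -> aform) c x := for_ (fnot (domF x)) (E c x).

Definition partBot : part.
Proof.
  refine {| sS := sigP EmbA; sN := sigNP EmbB;
    SS := fun O W x => O x x /\ EmbA_sem O W x; SN := fun O W x => ~ O x x \/ EmbB_sem O W x |}.
  - intros. unfold sigP. rewrite sat_fand, EmbA_ok. reflexivity.
  - intros. unfold sigNP. rewrite sat_for, sat_fnot, EmbB_ok. reflexivity.
Defined.
Definition partTop : part.
Proof.
  refine {| sS := sigP EmbB; sN := sigNP EmbA;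
    SS := fun O W x => O x x /\ EmbB_sem O W x; SN := fun O W x => ~ O x x \/ EmbA_sem O W x |}.
  - intros. unfold sigP. rewrite sat_fand, EmbB_ok. reflexivity.
  - intros. unfold sigNP. rewrite sat_for, sat_fnot, EmbA_ok. reflexivity.
Defined.

Definition Hat i j := xat (tn 0) (pT i j).
Definition C1 (P:part) := fall (fall (imp (Hat (tvar 1) (tvar 0)) (sS P (pT (tn 1) (tvar 0)) (tvar 0)))).
Definition C2 (P:part) := fall (imp (domF (tvar 0)) (for_ (sN P (pT (tn 2) (tvar 0)) (tvar 0)) (fex (Hat (tvar 0) (tvar 1))))).
Definition C3 := fall (fall (fall (fall (imp (Hat (tvar 3) (tvar 1)) (imp (Hat (tvar 2) (tvar 0)) (imp (flt (tvar 3) (tvar 2)) (flt (tvar 1) (tvar 0)))))))).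
Definition C4 := fall (fall (imp (Hat (tsucc (tvar 1)) (tvar 0)) (fex (Hat (tvar 2) (tvar 0))))).
Definition C5 := fall (fall (fall (imp (Hat (tvar 2) (tvar 1)) (imp (Hat (tvar 2) (tvar 0)) (feq (tvar 1) (tvar 0)))))).
Definition GoalR := fex (fex (fand (Hat (tvar 2) (tvar 1)) (fand (Hat (tvar 3) (tvar 0)) (foracle (tvar 1) (tvar 0))))).
Definition GoalN := fall (fall (imp (Hat (tvar 2) (tvar 1)) (imp (Hat (tvar 3) (tvar 0)) (fnot (foracle (tvar 1) (tvar 0)))))).
Definition phiG (P:part) G := fand (C1 P) (fand (C2 P) (fand C3 (fand C4 (fand C5 G)))).

Definition Hs (X:nat->Prop) i j := X (pr 0 (pr i j)).
Definition WSs (X:nat->Prop) j k := X (pr (pr 1 j) k).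
Definition WNs (X:nat->Prop) j k := X (pr (pr 2 j) k).
Definition Cond (P:part) O X :=
  (forall i j, Hs X i j -> SS P O (WSs X j) j) /\
  (forall j, O j j -> SN P O (WNs X j) j \/ exists i, Hs X i j) /\
  (forall i i' j j', Hs X i j -> Hs X i' j' -> i < i' -> j < j') /\
  (forall i j, Hs X (S i) j -> exists j', Hs X i j') /\
  (forall i j j', Hs X i j -> Hs X i j' -> j = j').

Lemma phiR_ok P O X m n : sat O X (env2 m n) (phiG P GoalR) <->
  Cond P O X /\ exists j j', Hs X m j /\ Hs X n j' /\ O j j'.
Proof.
  unfold phiG, C1, C2, C3, C4, C5, GoalR, Cond. unfold imp. cbn [sat]. setoid_rewrite (sS_ok P). setoid_rewrite (sN_ok P).
  unfold Hat, Hs, WSs, WNs. satt. unfold env2; cbn [scons]. tauto.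
Qed.
Lemma phiN_ok P O X m n : sat O X (env2 m n) (phiG P GoalN) <->
  Cond P O X /\ forall j j', Hs X m j -> Hs X n j' -> ~ O j j'.
Proof.
  unfold phiG, C1, C2, C3, C4, C5, GoalN, Cond. unfold imp. cbn [sat]. setoid_rewrite (sS_ok P). setoid_rewrite (sN_ok P).
  unfold Hat, Hs, WSs, WNs. satt. unfold env2; cbn [scons]. tauto.
Qed.


Definition ind (P:Prop) : nat := if excluded_middle_informative P then 1 else 0.
Lemma ind1 (P:Prop) : P -> ind P = 1.
Proof. unfold ind; destruct excluded_middle_informative; tauto. Qed.
Lemma ind0 (P:Prop) : ~P -> ind P = 0.
Proof. unfold ind; destruct excluded_middle_informative; tauto. Qed.
Lemma ind_le P : ind P <= 1.
Proof. unfold ind; destruct excluded_middle_informative; lia. Qed.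

Fixpoint cnt (P : nat -> Prop) x := match x with 0 => 0 | S x => cnt P x + ind (P x) end.

Lemma cnt_mono P x y : x <= y -> cnt P x <= cnt P y.
Proof. induction 1; simpl; lia. Qed.
Lemma cnt_lt P x y : P x -> x < y -> cnt P x < cnt P y.
Proof. intros Hx Hl. pose proof (cnt_mono P (S x) y Hl). simpl in H. rewrite ind1 in H; auto; lia. Qed.
Lemma cnt_inj P x y : P x -> P y -> cnt P x = cnt P y -> x = y.
Proof.
  intros Hx Hy E. destruct (lt_eq_lt_dec x y) as [[h|h]|h]; auto.
  - pose proof (cnt_lt P x y Hx h); lia.
  - pose proof (cnt_lt P y x Hy h); lia.
Qed.
Lemma cnt_ex P x n : n < cnt P x -> exists z, z < x /\ P z /\ cnt P z = n.
Proof.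
  induction x; simpl; intro H; [lia|].
  destruct (Nat.lt_ge_cases n (cnt P x)) as [h|h].
  - destruct (IHx h) as (z & ? & ? & ?). exists z; auto.
  - unfold ind in H; destruct excluded_middle_informative; [|lia].
    exists x; split; [lia|split; auto; lia].
Qed.
Lemma cnt_flat P a b : (forall z, a <= z -> z < b -> ~ P z) -> a <= b -> cnt P b = cnt P a.
Proof.
  intros H Hab. induction Hab; auto. simpl. rewrite ind0 by (apply H; lia).
  rewrite IHHab; [lia|]. intros; apply H; lia.
Qed.

Lemma enum_unique (P : nat -> Prop) (H : nat -> nat -> Prop) :
  (forall i j, H i j -> P j) -> (forall j, P j -> exists i, H i j) ->
  (forall i i' j j', H i j -> H i' j' -> i < i' -> j < j') ->
  (forall i j, H (S i) j -> exists j', H i j') ->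
  (forall i j j', H i j -> H i j' -> j = j') ->
  forall i j, H i j <-> (P j /\ cnt P j = i).
Proof.
  intros H1 H2 H3 H4 H5.
  assert (F : forall i j, H i j -> cnt P j = i).
  { induction i; intros j Hij.
    - replace 0 with (cnt P 0) by reflexivity. apply cnt_flat; [|lia].
      intros z _ hz Pz. destruct (H2 z Pz) as [iz Hz]. destruct iz.
      + pose proof (H5 _ _ _ Hz Hij); lia.
      + pose proof (H3 _ _ _ _ Hij Hz ltac:(lia)); lia.
    - destruct (H4 _ _ Hij) as [j0 Hj0]. pose proof (IHi _ Hj0) as E.
      pose proof (H3 _ _ _ _ Hj0 Hij ltac:(lia)) as lt0.
      rewrite (cnt_flat P (S j0) j); [simpl; rewrite ind1 by eauto; lia| |lia].
      intros z hz1 hz2 Pz. destruct (H2 z Pz) as [iz Hz].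
      destruct (lt_eq_lt_dec iz i) as [[h|h]|h].
      + pose proof (H3 _ _ _ _ Hz Hj0 h); lia.
      + subst. pose proof (H5 _ _ _ Hz Hj0); lia.
      + destruct (lt_eq_lt_dec iz (S i)) as [[h'|h']|h']; [lia| |].
        * subst. pose proof (H5 _ _ _ Hz Hij); lia.
        * pose proof (H3 _ _ _ _ Hij Hz h'); lia. }
  intros i j; split.
  - intro h; split; eauto.
  - intros [Pj E]. destruct (H2 j Pj) as [i' Hi']. pose proof (F _ _ Hi'). subst; congruence.
Qed.

Record cp (L:Type) (ltL: L->L->Prop) (B: nat->nat->Prop) := mkcp {
  fB : L -> nat; gB : nat -> L;
  c1 : forall m n, B m n -> B m m /\ B n n;
  cf : forall x, B (fB x) (fB x);
  cgf : forall x, gB (fB x) = x;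
  cfg : forall n, B n n -> fB (gB n) = n;
  cord : forall x y, (ltL x y \/ x = y) <-> B (fB x) (fB y) }.
Arguments fB {L ltL B}. Arguments gB {L ltL B}.
Arguments c1 {L ltL B}. Arguments cf {L ltL B}. Arguments cgf {L ltL B}.
Arguments cfg {L ltL B}. Arguments cord {L ltL B}.

Definition Rel (B : nat -> nat -> Prop) (Sp : nat -> Prop) m n :=
  exists j j', Sp j /\ cnt Sp j = m /\ Sp j' /\ cnt Sp j' = n /\ B j j'.

Lemma copy_part (L:Type) ltL B (C : cp L ltL B) (A:Type) (ltA : A -> A -> Prop) (iota : A -> L) (Pw : L -> Prop) :
  A -> (forall a a', iota a = iota a' -> a = a') -> (forall a a', ltA a a' <-> ltL (iota a) (iota a')) ->
  (forall w, Pw w <-> exists a, w = iota a) ->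
  is_copy A ltA (Rel B (fun j => B j j /\ Pw (gB C j))).
Proof.
  intros a0 inj ord Pw_iff. set (Sp := fun j => B j j /\ Pw (gB C j)).
  assert (Sf : forall a, Sp (fB C (iota a))).
  { intro a; split; [apply cf|]. rewrite cgf. apply Pw_iff; eauto. }
  split; [|split].
  - intros m n (j & j' & S1 & E1 & S2 & E2 & Bj). destruct (c1 C _ _ Bj).
    split; [exists j, j | exists j', j']; repeat split; auto; first [apply S1|apply S2].
  - intros m n hnm (j & j' & S1 & E1 & S2 & E2 & Bj).
    destruct (cnt_ex Sp j n ltac:(lia)) as (z & _ & Sz & Ez).
    exists z, z. repeat split; auto; apply Sz.
  - set (f := fun a => cnt Sp (fB C (iota a))).
    set (g := fun n => match excluded_middle_informative (exists a, cnt Sp (fB C (iota a)) = n) with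
                       | left h => proj1_sig (constructive_indefinite_description _ h)
                       | right _ => a0 end).
    assert (gf : forall a, g (f a) = a).
    { intro a. unfold g, f. destruct excluded_middle_informative as [h|h]; [|exfalso; eauto].
      destruct constructive_indefinite_description as [a' Ha']; simpl.
      apply cnt_inj in Ha'; auto. apply inj. rewrite <- (cgf C (iota a')), Ha', cgf; auto. }
    exists f, g. split; [|split; [|split]].
    + intro a. exists (fB C (iota a)), (fB C (iota a)). split; [apply Sf|split; [reflexivity|split;[apply Sf|split;[reflexivity|apply cf]]]].
    + exact gf.
    + intros n (j & j' & S1 & E1 & _). destruct S1 as [Bj Pj].
      destruct (proj1 (Pw_iff _) Pj) as [a Ea].
      assert (j = fB C (iota a)) by (rewrite <- Ea; symmetry; apply cfg; auto). subst j.
      unfold g. destruct excluded_middle_informative as [h|h]; [|exfalso; eauto].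
      destruct constructive_indefinite_description as [a' Ha']; simpl. exact Ha'.
    + intros x y. unfold f. split.
      * intro h. exists (fB C (iota x)), (fB C (iota y)). repeat split; auto; try apply Sf.
        apply cord. destruct h; [left; apply ord; auto|right; congruence].
      * intros (j & j' & S1 & E1 & S2 & E2 & Bj).
        apply cnt_inj in E1; auto. apply cnt_inj in E2; auto. subst.
        apply cord in Bj. destruct Bj as [h|h]; [left; apply ord; auto|right; auto].
Qed.


Lemma sum_wf A0 A1 (lt0 : A0 -> A0 -> Prop) (lt1 : A1 -> A1 -> Prop) :
  well_founded lt0 -> well_founded lt1 -> well_founded (sum_lt A0 A1 lt0 lt1).
Proof.
  intros w0 w1.
  assert (HL : forall a, Acc (sum_lt A0 A1 lt0 lt1) (inl a)).
  { intro a. induction (w0 a) as [a _ IH]. constructor. intros [a'|y'] h; simpl in h; [apply IH; auto|contradiction]. }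
  intros [a|y]; auto. induction (w1 y) as [y _ IH]. constructor. intros [a'|y'] h; simpl in h; auto.
Qed.

Lemma no_shrink {T} (lt : T -> T -> Prop) (wf : well_founded lt) (F : T -> T -> Prop)
  (tot : forall x, exists y, F x y) (mono : forall x x' y y', F x y -> F x' y' -> lt x x' -> lt y y') :
  forall x y, F x y -> ~ lt y x.
Proof.
  intro x; induction (wf x) as [x _ IH]; intros y Fxy Hyx.
  destruct (tot y) as [y' Fy]. exact (IH y Hyx y' Fy (mono _ _ _ _ Fy Fxy Hyx)).
Qed.

Lemma ltN_iff {L ltL B} (C : cp L ltL B) (irr : forall x, ~ ltL x x) x y :
  ltN B (fB C x) (fB C y) <-> ltL x y.
Proof.
  unfold ltN. split.
  - intros [h n]. apply cord in h. destruct h; auto. subst; tauto.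
  - intro h. split; [apply cord; auto|]. intro E. apply (f_equal (gB C)) in E. rewrite !cgf in E. subst; apply (irr y); auto.
Qed.
Lemma ltN_inv {L ltL B} (C : cp L ltL B) (irr : forall x, ~ ltL x x) i y :
  ltN B i (fB C y) -> i = fB C (gB C i) /\ ltL (gB C i) y.
Proof.
  intros h. assert (E : i = fB C (gB C i)) by (symmetry; apply cfg; apply (c1 C _ _ (proj1 h))).
  split; auto. apply (ltN_iff C irr). rewrite <- E; auto.
Qed.


Lemma sum_irr A0 A1 (lt0 : A0 -> A0 -> Prop) (lt1 : A1 -> A1 -> Prop) :
  (forall x, ~ lt0 x x) -> (forall x, ~ lt1 x x) -> forall x, ~ sum_lt A0 A1 lt0 lt1 x x.
Proof. intros h0 h1 [a|b]; simpl; auto. Qed.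



Lemma L1 A0 A1 lt0 lt1 B (C : cp (A0 + A1) (sum_lt A0 A1 lt0 lt1) B)
  (irr : forall x, ~ sum_lt A0 A1 lt0 lt1 x x) (ind : add_indecomposable A0 lt0) a :
  exists W, EmbA_sem B W (fB C (inl a)).
Proof.
  destruct (proj2 ind a a) as [c [phi [psi [_ [_ Hord]]]]].
  set (G := fun b i j => exists s : seg A0 lt0 a, i = fB C (inl (proj1_sig s)) /\
     ((b = 0 /\ j = fB C (inl (proj1_sig (phi (inl s))))) \/ (b = 1 /\ j = fB C (inl (proj1_sig (phi (inr s))))))).
  exists (fun k => exists b i j, k = pr b (pr i j) /\ G b i j).
  assert (HG : forall b i j, GA (fun k => exists b i j, k = pr b (pr i j) /\ G b i j) b i j <-> G b i j).
  { intros b i j; unfold GA; split.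
    - intros (b' & i' & j' & E & Hg). apply pr_inj in E as [-> E]. apply pr_inj in E as [-> ->]. auto.
    - intro h; exists b, i, j; auto. }
  assert (tot : forall i, ltN B i (fB C (inl a)) -> exists s : seg A0 lt0 a, i = fB C (inl (proj1_sig s))).
  { intros i h. destruct (ltN_inv C irr _ _ h) as [E h']. destruct (gB C i) as [a'|y'] eqn:Eg; [|contradiction].
    exists (exist _ a' h'). simpl. rewrite E; auto. }
  unfold EmbA_sem, totAs, monoAs. setoid_rewrite HG. unfold G.
  split; [|split; [|split; [|split]]].
  - intros i h. destruct (tot i h) as [s ->]. eexists; split; [apply (cf C)|]. exists s; split; [reflexivity|left; auto].
  - intros i h. destruct (tot i h) as [s ->]. eexists; split; [apply (cf C)|]. exists s; split; [reflexivity|right; auto].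
  - intros i i' j j' (s & -> & [[_ ->]|[? _]]) (s' & -> & [[_ ->]|[? _]]) _ _ h; try lia.
    apply (ltN_iff C irr) in h. apply (ltN_iff C irr). simpl in *. apply (Hord (inl s) (inl s')). exact h.
  - intros i i' j j' (s & -> & [[? _]|[_ ->]]) (s' & -> & [[? _]|[_ ->]]) _ _ h; try lia.
    apply (ltN_iff C irr) in h. apply (ltN_iff C irr). simpl in *. apply (Hord (inr s) (inr s')). exact h.
  - intros i i' j j' (s & -> & [[_ ->]|[? _]]) (s' & -> & [[? _]|[_ ->]]) _ _; try lia.
    apply (ltN_iff C irr). simpl. apply (Hord (inl s) (inr s')). exact I.
Qed.

Lemma L2 A0 A1 lt0 lt1 B (C : cp (A0 + A1) (sum_lt A0 A1 lt0 lt1) B)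
  (irr : forall x, ~ sum_lt A0 A1 lt0 lt1 x x) (olt : ord_lt A1 lt1 A0 lt0) y :
  exists W, EmbB_sem B W (fB C (inr y)).
Proof.
  destruct olt as [ast [eps [_ [_ [_ Hord]]]]].
  set (tgt := fun w : A0 + A1 => match w with inl a => inl a | inr y' => inl (proj1_sig (eps y')) end : A0 + A1).
  set (W := fun k => (exists w, k = pr 0 (pr (fB C w) (fB C (tgt w)))) \/ (exists y', k = pr 1 (fB C (inr y')))).
  assert (HG : forall k j, GB W k j <-> exists w, k = fB C w /\ j = fB C (tgt w)).
  { intros k j; unfold GB, W; split.
    - intros [(w & E)|(y' & E)]; apply pr_inj in E as [E1 E2]; [|lia]. apply pr_inj in E2 as [-> ->]; eauto.
    - intros (w & -> & ->). left; eauto. }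
  assert (HS : forall w, SB W (fB C w) <-> exists y', w = inr y').
  { intros w; unfold SB, W; split.
    - intros [(w' & E)|(y' & E)]; apply pr_inj in E as [E1 E2]; [lia|].
      apply (f_equal (gB C)) in E2. rewrite !cgf in E2. eauto.
    - intros (y' & ->). right; eauto. }
  exists W. split.
  - intros k hk. exists (fB C (tgt (gB C k))). split.
    + apply HG. exists (gB C k). split; auto. symmetry; apply cfg; auto.
    + apply (ltN_iff C irr). destruct (gB C k); simpl; auto.
  - intros k k' j j' h1 h2 _ _ h. apply HG in h1 as (w & -> & ->). apply HG in h2 as (w' & -> & ->).
    rewrite !HS. apply (ltN_iff C irr) in h. rewrite (ltN_iff C irr).
    destruct w as [a|y1]; destruct w' as [a'|y2]; simpl in h |- *.
    + right. split; [intros (? & ?); discriminate|]. split; [intros (? & ?); discriminate|]. auto.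
    + left. split; [intros (? & ?); discriminate|eauto].
    + contradiction.
    + right. split; [eauto|split; [eauto|]]. apply Hord in h. exact h.
Qed.

Lemma L3 A0 A1 lt0 lt1 B (C : cp (A0 + A1) (sum_lt A0 A1 lt0 lt1) B)
  (irr : forall x, ~ sum_lt A0 A1 lt0 lt1 x x) (wf : well_founded (sum_lt A0 A1 lt0 lt1))
  (ind : add_indecomposable A0 lt0) a W :
  ~ EmbB_sem B W (fB C (inl a)).
Proof.
  intros [tot mono].
  destruct (proj2 ind a a) as [c [phi [psi [_ [_ Hord]]]]].
  set (F := fun (w u : A0 + A1) => exists j (s : seg A0 lt0 a), GB W (fB C w) j /\ j = fB C (inl (proj1_sig s)) /\
     ((~ SB W (fB C w) /\ u = inl (proj1_sig (phi (inl s)))) \/ (SB W (fB C w) /\ u = inl (proj1_sig (phi (inr s)))))).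
  assert (Ftot : forall w, exists u, F w u).
  { intro w. destruct (tot (fB C w) (cf C w)) as (j & hG & hl).
    destruct (ltN_inv C irr _ _ hl) as [E h']. destruct (gB C j) as [a'|y'] eqn:Eg; [|contradiction].
    destruct (classic (SB W (fB C w))) as [hs|hs].
    - exists (inl (proj1_sig (phi (inr (exist _ a' h'))))). exists j, (exist _ a' h'). simpl. rewrite <- E. auto.
    - exists (inl (proj1_sig (phi (inl (exist _ a' h'))))). exists j, (exist _ a' h'). simpl. rewrite <- E. auto. }
  assert (Fmono : forall x x' y y', F x y -> F x' y' -> sum_lt A0 A1 lt0 lt1 x x' -> sum_lt A0 A1 lt0 lt1 y y').
  { intros w w' u u' (j & s & hg & -> & hu) (j' & s' & hg' & -> & hu') h.
    pose proof (mono _ _ _ _ hg hg' (cf C w) (cf C w') (proj2 (ltN_iff C irr w w') h)) as M.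
    destruct M as [[ns s2]|[i1 [i2 hl]]].
    - destruct hu as [[_ ->]|[? _]]; [|tauto]. destruct hu' as [[? _]|[_ ->]]; [tauto|].
      simpl. apply (Hord (inl s) (inr s')). exact I.
    - apply (ltN_iff C irr) in hl. simpl in hl.
      destruct hu as [[n1 ->]|[y1 ->]]; destruct hu' as [[n2 ->]|[y2 ->]]; try tauto; simpl.
      + apply (Hord (inl s) (inl s')). exact hl.
      + apply (Hord (inr s) (inr s')). exact hl. }
  destruct (Ftot (inl c)) as [u Fu].
  apply (no_shrink _ wf F Ftot Fmono _ _ Fu).
  destruct Fu as (j & s & _ & _ & [[_ ->]|[_ ->]]); simpl; apply proj2_sig.
Qed.

Lemma L4 A0 A1 lt0 lt1 B (C : cp (A0 + A1) (sum_lt A0 A1 lt0 lt1) B)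
  (irr : forall x, ~ sum_lt A0 A1 lt0 lt1 x x) (wf : well_founded (sum_lt A0 A1 lt0 lt1))
  (olt : ord_lt A1 lt1 A0 lt0) y W :
  ~ EmbA_sem B W (fB C (inr y)).
Proof.
  intros (tot0 & tot1 & mono0 & mono1 & cross).
  destruct olt as [ast [eps [_ [_ [_ Hord]]]]].
  set (F := fun (w u : A0 + A1) => match w with inl a => GA W 0 (fB C (inl a)) (fB C u)
                                 | inr y' => GA W 1 (fB C (inl (proj1_sig (eps y')))) (fB C u) end).
  assert (Hx : forall a, ltN B (fB C (inl a)) (fB C (inr y))) by (intro; apply (ltN_iff C irr); exact I).
  assert (Ftot : forall w, exists u, F w u).
  { intros [a|y']; [destruct (tot0 _ (Hx a)) as (j & hj & hg)|destruct (tot1 _ (Hx (proj1_sig (eps y')))) as (j & hj & hg)];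
      exists (gB C j); simpl; rewrite cfg; auto. }
  assert (Fmono : forall x x' y y', F x y -> F x' y' -> sum_lt A0 A1 lt0 lt1 x x' -> sum_lt A0 A1 lt0 lt1 y y').
  { intros [a|y1] [a'|y2] u u' h1 h2 h; simpl in h1, h2, h; try contradiction; apply (ltN_iff C irr).
    - apply (mono0 _ _ _ _ h1 h2 (Hx _) (Hx _)). apply (ltN_iff C irr). exact h.
    - apply (cross _ _ _ _ h1 h2 (Hx _) (Hx _)).
    - apply (mono1 _ _ _ _ h1 h2 (Hx _) (Hx _)). apply (ltN_iff C irr). apply Hord. exact h. }
  destruct (tot1 _ (Hx ast)) as (jst & hjst & hgst).
  set (ust := gB C jst).
  assert (Bnd : forall w u, F w u -> sum_lt A0 A1 lt0 lt1 u ust).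
  { intros [a|y'] u h; simpl in h; apply (ltN_iff C irr); unfold ust; rewrite cfg by auto.
    - apply (cross _ _ _ _ h hgst (Hx _) (Hx _)).
    - apply (mono1 _ _ _ _ h hgst (Hx _) (Hx _)). apply (ltN_iff C irr). simpl. apply proj2_sig. }
  destruct (Ftot ust) as [u Fu].
  exact (no_shrink _ wf F Ftot Fmono _ _ Fu (Bnd _ _ Fu)).
Qed.


Lemma pr_pos b : 0 < pr (S b) 0 \/ True.
Proof. auto. Qed.

Lemma part_correct (P : part) B (Sp : nat -> Prop)
  (Sdom : forall j, Sp j -> B j j)
  (SSs : forall W x, SS P B W x -> Sp x) (SNs : forall W x, SN P B W x -> ~ Sp x)
  (SSc : forall x, Sp x -> exists W, SS P B W x) (SNc : forall x, ~ Sp x -> exists W, SN P B W x) :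
  forall m n, (Rel B Sp m n <-> sigma11_rel (phiG P GoalR) B m n) /\
              (Rel B Sp m n <-> pi11_rel (fnot (phiG P GoalN)) B m n).
Proof.
  assert (condH : forall X, Cond P B X -> forall i j, Hs X i j <-> (Sp j /\ cnt Sp j = i)).
  { intros X (c1 & c2 & c3 & c4 & c5). apply enum_unique; auto.
    - intros i j h. eapply SSs; eauto.
    - intros j hj. destruct (c2 j (Sdom j hj)) as [h|h]; auto. exfalso; eapply SNs; eauto. }
  assert (build : exists X, Cond P B X /\ forall i j, Hs X i j <-> (Sp j /\ cnt Sp j = i)).
  { assert (ch : forall j, exists W, (Sp j -> SS P B W j) /\ (~ Sp j -> SN P B W j)).
    { intro j. destruct (classic (Sp j)) as [h|h].
      - destruct (SSc j h) as [W hW]. exists W; tauto.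
      - destruct (SNc j h) as [W hW]. exists W; tauto. }
    destruct (functional_choice _ ch) as [WF hWF].
    set (X := fun k => (exists i j, k = pr 0 (pr i j) /\ Sp j /\ cnt Sp j = i) \/
                       (exists j k', k = pr (pr 1 j) k' /\ WF j k') \/
                       (exists j k', k = pr (pr 2 j) k' /\ WF j k')).
    assert (pr_pos : forall a b, 0 < pr (S a) b) by (intros; unfold pr; lia).
    assert (HX : forall i j, Hs X i j <-> (Sp j /\ cnt Sp j = i)).
    { intros i j; unfold Hs, X; split.
      - intros [(i' & j' & E & h)|[(j' & k' & E & _)|(j' & k' & E & _)]]; apply pr_inj in E as [E1 E2].
        + apply pr_inj in E2 as [-> ->]; auto.
        + specialize (pr_pos 0 j'); lia.
        + specialize (pr_pos 1 j'); lia.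
      - intro h; left; eauto. }
    assert (HW : forall j, WSs X j = WF j).
    { intro j. extensionality k. apply propositional_extensionality. unfold WSs, X; split.
      - intros [(i' & j' & E & h)|[(j' & k' & E & h)|(j' & k' & E & h)]]; apply pr_inj in E as [E1 E2].
        + specialize (pr_pos 0 j); lia.
        + apply pr_inj in E1 as [_ ->]. subst; auto.
        + apply pr_inj in E1 as [E1 _]. lia.
      - intro h; right; left; eauto. }
    assert (HN : forall j, WNs X j = WF j).
    { intro j. extensionality k. apply propositional_extensionality. unfold WNs, X; split.
      - intros [(i' & j' & E & h)|[(j' & k' & E & h)|(j' & k' & E & h)]]; apply pr_inj in E as [E1 E2].
        + specialize (pr_pos 1 j); lia.
        + apply pr_inj in E1 as [E1 _]. lia.
        + apply pr_inj in E1 as [_ ->]. subst; auto.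
      - intro h; right; right; eauto. }
    exists X. split; auto. split; [|split; [|split; [|split]]].
    - intros i j h. rewrite HW. apply hWF. apply HX in h; tauto.
    - intros j hj. destruct (classic (Sp j)) as [h|h].
      + right. exists (cnt Sp j). apply HX; auto.
      + left. rewrite HN. apply hWF; auto.
    - intros i i' j j' h1 h2 hl. apply HX in h1 as [s1 <-]. apply HX in h2 as [s2 <-].
      destruct (Nat.lt_ge_cases j j') as [h|h]; auto. pose proof (cnt_mono Sp _ _ h); lia.
    - intros i j h. apply HX in h as [s1 e]. destruct (cnt_ex Sp j i ltac:(lia)) as (z & _ & sz & ez).
      exists z. apply HX; auto.
    - intros i j j' h1 h2. apply HX in h1 as [s1 e1]. apply HX in h2 as [s2 e2]. apply (cnt_inj Sp); congruence. }
  intros m n. split.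
  - unfold sigma11_rel. setoid_rewrite phiR_ok. split.
    + intros (j & j' & s1 & e1 & s2 & e2 & hb). destruct build as (X & hc & hX).
      exists X. split; auto. exists j, j'. split; [apply hX; auto|split; [apply hX; auto|auto]].
    + intros (X & hc & j & j' & h1 & h2 & hb). rewrite (condH X hc) in h1, h2.
      exists j, j'. tauto.
  - unfold pi11_rel. simpl. setoid_rewrite phiN_ok. split.
    + intros (j & j' & s1 & e1 & s2 & e2 & hb) X [hc hN].
      apply (hN j j'); try apply (condH X hc); auto.
    + intro H. apply NNPP. intro nR. destruct build as (X & hc & hX). apply (H X). split; auto.
      intros j j' h1 h2 hb. apply nR. rewrite hX in h1, h2. exists j, j'. tauto.
Qed.


Lemma x_eq {L ltL B} (C : cp L ltL B) x : B x x -> x = fB C (gB C x).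
Proof. intro h; symmetry; apply cfg; auto. Qed.

Theorem mainTheorem11 :
  forall (A0 : Type) (lt0 : A0 -> A0 -> Prop) (A1 : Type) (lt1 : A1 -> A1 -> Prop),
    is_wellorder A0 lt0 -> countable A0 ->
    is_wellorder A1 lt1 -> countable A1 ->
    add_indecomposable A0 lt0 -> add_indecomposable A1 lt1 ->
    ord_lt A1 lt1 A0 lt0 ->
    sH_le (is_copy A0 lt0) (is_copy (A0 + A1) (sum_lt A0 A1 lt0 lt1)) /\
    sH_le (is_copy A1 lt1) (is_copy (A0 + A1) (sum_lt A0 A1 lt0 lt1)).
Proof.
  intros A0 lt0 A1 lt1 wo0 _ wo1 _ ind0 ind1 olt.
  destruct wo0 as (irr0 & _ & _ & wf0). destruct wo1 as (irr1 & _ & _ & wf1).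
  pose proof (sum_irr _ _ _ _ irr0 irr1) as irr. pose proof (sum_wf _ _ _ _ wf0 wf1) as wf.
  destruct (proj1 ind0) as [a0].
  destruct (proj1 ind1) as [y0].
  split.
  - exists (phiG partBot GoalR), (fnot (phiG partBot GoalN)). intros B HB.
    destruct HB as (h1 & h2 & f & g & hf & hgf & hfg & hord).
    pose (C := mkcp _ _ _ f g h1 hf hgf hfg hord).
    set (Pw := fun w : A0 + A1 => exists a, w = inl a).
    exists (Rel B (fun j => B j j /\ Pw (gB C j))). split.
    + apply (copy_part _ _ _ C A0 lt0 inl Pw a0).
      * intros a a' E; injection E; auto.
      * intros; simpl; tauto.
      * intros; reflexivity.
    + cut (forall m n, (Rel B (fun j => B j j /\ Pw (gB C j)) m n <-> sigma11_rel (phiG partBot GoalR) B m n) /\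
              (Rel B (fun j => B j j /\ Pw (gB C j)) m n <-> pi11_rel (fnot (phiG partBot GoalN)) B m n)).
      { intro H; split; intros m n; apply H. }
      apply part_correct; cbn [SS SN partBot partTop].
      * intros j [h _]; exact h.
      * intros W x [hx hE]. split; auto. rewrite (x_eq C x hx) in hE.
        destruct (gB C x) as [a|y]; [exists a; auto|]. exfalso; exact (L4 _ _ _ _ _ C irr wf olt y W hE).
      * intros W x [hx|hE] [hx' [a ha]]; auto. rewrite (x_eq C x hx'), ha in hE.
        exact (L3 _ _ _ _ _ C irr wf ind0 a W hE).
      * intros x [hx [a ha]]. destruct (L1 _ _ _ _ _ C irr ind0 a) as [W hW]. exists W.
        split; auto. rewrite (x_eq C x hx), ha; auto.
      * intros x hn. destruct (classic (B x x)) as [hx|hx]; [|exists (fun _ => False); left; auto].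
        destruct (gB C x) as [a|y] eqn:Eg; [exfalso; apply hn; split; auto; exists a; auto|].
        destruct (L2 _ _ _ _ _ C irr olt y) as [W hW]. exists W. right. rewrite (x_eq C x hx), Eg; auto.
  - exists (phiG partTop GoalR), (fnot (phiG partTop GoalN)). intros B HB.
    destruct HB as (h1 & h2 & f & g & hf & hgf & hfg & hord).
    pose (C := mkcp _ _ _ f g h1 hf hgf hfg hord).
    set (Pw := fun w : A0 + A1 => exists y, w = inr y).
    exists (Rel B (fun j => B j j /\ Pw (gB C j))). split.
    + apply (copy_part _ _ _ C A1 lt1 inr Pw y0).
      * intros a a' E; injection E; auto.
      * intros; simpl; tauto.
      * intros; reflexivity.
    + cut (forall m n, (Rel B (fun j => B j j /\ Pw (gB C j)) m n <-> sigma11_rel (phiG partTop GoalR) B m n) /\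
              (Rel B (fun j => B j j /\ Pw (gB C j)) m n <-> pi11_rel (fnot (phiG partTop GoalN)) B m n)).
      { intro H; split; intros m n; apply H. }
      apply part_correct; cbn [SS SN partBot partTop].
      * intros j [h _]; exact h.
      * intros W x [hx hE]. split; auto. rewrite (x_eq C x hx) in hE.
        destruct (gB C x) as [a|y]; [|exists y; auto]. exfalso; exact (L3 _ _ _ _ _ C irr wf ind0 a W hE).
      * intros W x [hx|hE] [hx' [y hy]]; auto. rewrite (x_eq C x hx'), hy in hE.
        exact (L4 _ _ _ _ _ C irr wf olt y W hE).
      * intros x [hx [y hy]]. destruct (L2 _ _ _ _ _ C irr olt y) as [W hW]. exists W.
        split; auto. rewrite (x_eq C x hx), hy; auto.
      * intros x hn. destruct (classic (B x x)) as [hx|hx]; [|exists (fun _ => False); left; auto].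
        destruct (gB C x) as [a|y] eqn:Eg; [|exfalso; apply hn; split; auto; exists y; auto].
        destruct (L1 _ _ _ _ _ C irr ind0 a) as [W hW]. exists W. right. rewrite (x_eq C x hx), Eg; auto.
Qed.
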